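(* Let $\boldsymbol{S}_{\rm B},\boldsymbol{S}_{\rm W}\in\mathbb{R}^{M\times M}$ be the between-class and within-class scatter matrices of a labelled data set (defined in the context), with $\boldsymbol{S}_{\rm W}$ invertible, and let $\mathcal{R}(\boldsymbol{u})=\frac{\boldsymbol{u}^\top\boldsymbol{S}_{\rm B}\boldsymbol{u}}{\boldsymbol{u}^\top\boldsymbol{S}_{\rm W}\boldsymbol{u}}$ for nonzero $\boldsymbol{u}\in\mathbb{R}^M$. Let $\boldsymbol{u}_1,\ldots,\boldsymbol{u}_{n-1}$ ($2\le n\le M$) be the GO-LDA discriminant directions (defined in the context), and let $\boldsymbol{u}_n\in\mathbb{R}^M$ be a solution of $$\max_{\boldsymbol{u}}\ \mathcal{R}(\boldsymbol{u})\quad\text{s.t.}\quad\boldsymbol{u}\perp\boldsymbol{u}_i\ \text{ for all } i=1,\ldots,n-1.$$ Define $\boldsymbol{U}_{n-1}=(\boldsymbol{u}_1\ \cdots\ \boldsymbol{u}_{n-1})\in\mathbb{R}^{M\times(n-1)}$, let $\boldsymbol{B}_{n-1}\in\mathbb{R}^{(n-1)\times M}$ be the matrix whose $i$-th row is $\boldsymbol{u}_i^\top\boldsymbol{S}_{\rm W}^{-1}\boldsymbol{S}_{\rm B}$, and let $\boldsymbol{T}_{n-1}\in\mathbb{R}^{(n-1)\times(n-1)}$ have $(i,j)$ entry $\boldsymbol{u}_i^\top\boldsymbol{S}_{\rm W}^{-1}\boldsymbol{u}_j$. Then $\boldsymbol{u}_n$ is an eigenvector corresponding to the largest eigenvalue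 of the generalised eigenvalue problem $$\left(\boldsymbol{S}_{\rm B}-\boldsymbol{U}_{n-1}\boldsymbol{T}_{n-1}^{-1}\boldsymbol{B}_{n-1}\right)\boldsymbol{u}=\mu\boldsymbol{S}_{\rm W}\boldsymbol{u}.$$
   Context: Given $N$ samples $\boldsymbol{y}_1,\ldots,\boldsymbol{y}_N\in\mathbb{R}^M$ partitioned into $C$ classes, where class $j$ consists of samples $\boldsymbol{y}^j_1,\ldots,\boldsymbol{y}^j_{N_j}$. Let $\bar{\boldsymbol{y}}$ be the overall mean and $\bar{\boldsymbol{y}}_j$ the mean of class $j$. The between-class scatter is $\boldsymbol{S}_{\rm B}=\sum_{j=1}^C(\bar{\boldsymbol{y}}_j-\bar{\boldsymbol{y}})(\bar{\boldsymbol{y}}_j-\bar{\boldsymbol{y}})^\top$ and the within-class scatter is $\boldsymbol{S}_{\rm W}=\sum_{j=1}^C\sum_{k=1}^{N_j}(\boldsymbol{y}^j_k-\bar{\boldsymbol{y}}_j)(\boldsymbol{y}^j_k-\bar{\boldsymbol{y}}_j)^\top$, assumed invertible. GO-LDA discriminant directions are defined recursively: $\boldsymbol{u}_1$ is the (normalised) eigenvector corresponding to the largest eigenvalue of the generalised eigenvalue problem $\boldsymbol{S}_{\rm B}\boldsymbol{v}=\lambda\boldsymbol{S}_{\rm W}\boldsymbol{v}$; for $k\ge2$, $\boldsymbol{u}_k$ is a (normalised) maximiser of $\mathcal{R}(\boldsymbol{u})$ subject to $\boldsymbol{u}$ being orthogonal to each of $\boldsymbol{u}_1,\ldots,\boldsymbol{u}_{k-1}$.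 *)

(* Defs.v *)
From HB Require Import structures.
From mathcomp Require Import all_boot all_order all_algebra.
From mathcomp Require Import reals.
Set Implicit Arguments. Unset Strict Implicit. Unset Printing Implicit Defensive.
Import Order.TTheory GRing.Theory Num.Theory.
Local Open Scope ring_scope.

Section GOLDA.
Variable R : realType.
Variable M : nat.

Definition qf (u : 'cV[R]_M) (A : 'M[R]_M) (v : 'cV[R]_M) : R :=
  (u^T *m A *m v) 0 0.

Definition dotv (u v : 'cV[R]_M) : R := (u^T *m v) 0 0.

Definition class_size N C (lab : 'I_N -> 'I_C) (j : 'I_C) : nat :=
  #|[set k | lab k == j]|.

Definition class_mean N C (y : 'I_N -> 'cV[R]_M) (lab : 'I_N -> 'I_C)
  (j : 'I_C) : 'cV[R]_M :=
  (class_size lab j)%:R^-1 *: \sum_(k < N | lab k == j) y k.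

Definition overall_mean N (y : 'I_N -> 'cV[R]_M) : 'cV[R]_M :=
  N%:R^-1 *: \sum_(k < N) y k.

Definition scatter_B N C (y : 'I_N -> 'cV[R]_M) (lab : 'I_N -> 'I_C)
  : 'M[R]_M :=
  \sum_(j < C) (class_mean y lab j - overall_mean y) *m
               (class_mean y lab j - overall_mean y)^T.

Definition scatter_W N C (y : 'I_N -> 'cV[R]_M) (lab : 'I_N -> 'I_C)
  : 'M[R]_M :=
  \sum_(j < C) \sum_(k < N | lab k == j)
     (y k - class_mean y lab j) *m (y k - class_mean y lab j)^T.

Definition rayleigh (SB SW : 'M[R]_M) (u : 'cV[R]_M) : R :=
  qf u SB u / qf u SW u.

Definition gen_eigenvalue (A B : 'M[R]_M) (mu : R) : Prop :=
  exists2 v : 'cV[R]_M, v != 0 & A *m v = mu *: (B *m v).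

Definition top_gen_eigenvector (A B : 'M[R]_M) (v : 'cV[R]_M) : Prop :=
  v != 0 /\
  exists mu : R, A *m v = mu *: (B *m v) /\
    forall mu' : R, gen_eigenvalue A B mu' -> mu' <= mu.

Definition constrained_maximiser (SB SW : 'M[R]_M) (u : nat -> 'cV[R]_M)
  (i : nat) (x : 'cV[R]_M) : Prop :=
  [/\ x != 0,
      (forall j, (j < i)%N -> dotv x (u j) = 0) &
      (forall z : 'cV[R]_M, z != 0 -> (forall j, (j < i)%N -> dotv z (u j) = 0) ->
         rayleigh SB SW z <= rayleigh SB SW x)].

(* u 0, ..., u (k-1) are the first k GO-LDA directions (u_1,...,u_k). *)
Definition golda_directions (SB SW : 'M[R]_M) (u : nat -> 'cV[R]_M) (k : nat)
  : Prop :=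
  forall i, (i < k)%N ->
    dotv (u i) (u i) = 1 /\
    (if i == 0%N then top_gen_eigenvector SB SW (u i)
     else constrained_maximiser SB SW u i (u i)).

Definition Umat (m : nat) (u : nat -> 'cV[R]_M) : 'M[R]_(M, m) :=
  \matrix_(r < M, i < m) u i r 0.

Definition Bmat (m : nat) (SB SW : 'M[R]_M) (u : nat -> 'cV[R]_M) : 'M[R]_(m, M) :=
  \matrix_(i < m, c < M) ((u i)^T *m invmx SW *m SB) 0 c.

Definition Tmat (m : nat) (SW : 'M[R]_M) (u : nat -> 'cV[R]_M) : 'M[R]_m :=
  \matrix_(i < m, j < m) qf (u i) (invmx SW) (u j).

End GOLDA.

(* Main.v *)
Require Import Defs.
From HB Require Import structures.
From mathcomp Require Import all_boot all_order all_algebra.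
From mathcomp Require Import reals ring lra.
Import Order.TTheory GRing.Theory Num.Theory.
Local Open Scope ring_scope.
From mathcomp Require Import ring lra.
Set Implicit Arguments. Unset Strict Implicit. Unset Printing Implicit Defensive.

Lemma qf_sym (R : realType) M (A : 'M[R]_M) x y : A^T = A -> qf x A y = qf y A x.
Proof.
move=> hA; rewrite /qf; have -> : (x^T *m A *m y) 0 0 = (x^T *m A *m y)^T 0 0 by rewrite [RHS]mxE.
by rewrite !trmx_mul trmxK hA mulmxA.
Qed.

Lemma qfDl (R : realType) M (A : 'M[R]_M) x y z : qf (x + y) A z = qf x A z + qf y A z.
Proof. by rewrite /qf raddfD /= !mulmxDl [LHS]mxE. Qed.
Lemma qfDr (R : realType) M (A : 'M[R]_M) x y z : qf z A (x + y) = qf z A x + qf z A y.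
Proof. by rewrite /qf !mulmxDr [LHS]mxE. Qed.
Lemma qfZl (R : realType) M (A : 'M[R]_M) a x z : qf (a *: x) A z = a * qf x A z.
Proof. by rewrite /qf linearZ /= -!scalemxAl [LHS]mxE. Qed.
Lemma qfZr (R : realType) M (A : 'M[R]_M) a x z : qf z A (a *: x) = a * qf z A x.
Proof. by rewrite /qf -!scalemxAr [LHS]mxE. Qed.
Lemma qfDA (R : realType) M (A B : 'M[R]_M) x z : qf x (A + B) z = qf x A z + qf x B z.
Proof. by rewrite /qf mulmxDr mulmxDl [LHS]mxE. Qed.
Lemma qfZA (R : realType) M (A : 'M[R]_M) a x z : qf x (a *: A) z = a * qf x A z.
Proof. by rewrite /qf -scalemxAr -scalemxAl [LHS]mxE. Qed.
Lemma qfNA (R : realType) M (A : 'M[R]_M) x z : qf x (- A) z = - qf x A z.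
Proof. by rewrite /qf mulmxN mulNmx [LHS]mxE. Qed.

Lemma quad_lin0 (R : realType) (c d : R) : (forall t, 2 * t * c + t ^+ 2 * d <= 0) -> c = 0.
Proof.
move=> h.
have he : 0 < `|d| + 1 by rewrite ltr_pwDr // normr_ge0.
have hd : - `|d| <= d by apply: lerNnormlW.
have ht := h (c / (`|d| + 1)).
have hte : c = c / (`|d| + 1) * (`|d| + 1) by rewrite mulrVK // unitfE gt_eqF.
move: ht; rewrite [in X in 2 * _ * X]hte; move: (c / (`|d| + 1)) hte => t hte ht.
have h2 : t ^+ 2 * (2 * (`|d| + 1) + d) <= 0.
  by rewrite (_ : t ^+ 2 * (2 * (`|d| + 1) + d) = 2 * t * (t * (`|d| + 1)) + t ^+ 2 * d) //; ring.
have h3 : 0 < 2 * (`|d| + 1) + d by lra.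
have : t ^+ 2 <= 0 by rewrite -(pmulr_lle0 _ h3).
move=> h4; have : t == 0 by rewrite -sqrf_eq0 eq_le h4 sqr_ge0.
by move=> /eqP t0; rewrite hte t0 mul0r.
Qed.

Lemma inj_unit (R : realType) m (T : 'M[R]_m) :
  (forall a : 'cV_m, T *m a = 0 -> a = 0) -> T \in unitmx.
Proof.
move=> hT; rewrite -unitmx_tr -row_free_unit -kermx_eq0; apply/eqP/row_matrixP => i.
rewrite row0; apply: trmx_inj; rewrite trmx0; apply: hT.
by apply: trmx_inj; rewrite trmx_mul trmxK -row_mul mulmx_ker row0 trmx0.
Qed.

Lemma core (R : realType) M m (B W : 'M[R]_M) (U : 'M[R]_(M,m)) (x : 'cV[R]_M)
 (Bsym : B^T = B) (Wsym : W^T = W)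
 (Bpsd : forall v, 0 <= qf v B v)
 (Wpd : forall v, v != 0 -> 0 < qf v W v)
 (Wu : W \in unitmx) (UU : U^T *m U = 1%:M)
 (xne : x != 0) (xU : U^T *m x = 0)
 (xmax : forall z, z != 0 -> U^T *m z = 0 -> rayleigh B W z <= rayleigh B W x) :
 top_gen_eigenvector (B - U *m invmx (U^T *m invmx W *m U) *m (U^T *m invmx W *m B)) W x.
Proof.
have Wpd0 : forall v, qf v W v = 0 -> v = 0.
  by move=> v hv; apply/eqP; apply: contraTT (eqxx (0:R)) => /Wpd; rewrite hv ltxx.
set Wi := invmx W.
have WWi : W *m Wi = 1%:M by rewrite /Wi mulmxV.
have WiW : Wi *m W = 1%:M by rewrite /Wi mulVmx.
have WiT : Wi^T = Wi by rewrite /Wi trmx_inv Wsym.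
have Wipd0 : forall v, qf v Wi v = 0 -> v = 0.
  move=> v hv; have e : qf (Wi *m v) W (Wi *m v) = 0.
    by rewrite -hv /qf trmx_mul WiT -!mulmxA (mulmxA W) WWi mul1mx.
  by rewrite -[v]mul1mx -WWi -mulmxA (Wpd0 _ e) mulmx0.
set T := U^T *m Wi *m U.
have Tu : T \in unitmx.
  apply: inj_unit => a ha.
  have e : qf (U *m a) Wi (U *m a) = 0.
    rewrite /qf; have -> : (U *m a)^T *m Wi *m (U *m a) = a^T *m (T *m a) by rewrite /T trmx_mul !mulmxA.
    by rewrite ha mulmx0 mxE.
  by rewrite -[a]mul1mx -UU -mulmxA (Wipd0 _ e) mulmx0.
set Ti := invmx T.
have TTi : T *m Ti = 1%:M by rewrite /Ti mulmxV.
have TiT : Ti *m T = 1%:M by rewrite /Ti mulVmx.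
set K := U *m Ti *m (U^T *m Wi).
have -> : U *m Ti *m (U^T *m Wi *m B) = K *m B by rewrite /K !mulmxA.
set rho := rayleigh B W x.
have qx : 0 < qf x W x by apply: Wpd.
set A' := B - rho *: W.
have A'sym : A'^T = A' by rewrite /A' linearB /= linearZ /= Bsym Wsym.
have qA' : forall a b, qf a A' b = qf a B b - rho * qf a W b.
  by move=> a b; rewrite /A' qfDA qfNA qfZA.
have qA'x : qf x A' x = 0.
  by rewrite qA' /rho /rayleigh divfK ?subrr // gt_eqF.
have c0 : forall z, U^T *m z = 0 -> qf x A' z = 0.
  move=> z hz; apply: (@quad_lin0 _ _ (qf z A' z)) => t.
  have e : qf (x + t *: z) A' (x + t *: z) = 2 * t * qf x A' z + t ^+ 2 * qf z A' z.
    rewrite qfDl !qfDr !qfZl !qfZr qA'x (qf_sym z x A'sym); ring.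
  rewrite -e.
  have [->|nz] := eqVneq (x + t *: z) 0.
    by rewrite /qf mulmx0 mxE.
  have hU : U^T *m (x + t *: z) = 0 by rewrite mulmxDr xU -scalemxAr hz scaler0 addr0.
  have := xmax _ nz hU; rewrite /rayleigh -/rho ler_pdivrMr ?Wpd // => hle.
  by rewrite qA' subr_le0.
set w := A' *m x.
set P := 1%:M - K.
set z := Wi *m (P *m w).
have UWiK : U^T *m Wi *m K = U^T *m Wi.
  by rewrite /K !mulmxA -/T TTi mul1mx.
have zU : U^T *m z = 0.
  by rewrite /z /P !mulmxA (mulmxBr (U^T *m Wi)) mulmx1 UWiK subrr !mul0mx.
have Wz : W *m z = P *m w by rewrite /z mulmxA WWi mul1mx.
have PTz : P^T *m z = z.
  by rewrite /P linearB /= trmx1 mulmxBl mul1mx /K !trmx_mul -!mulmxA zU !mulmx0 subr0.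
have zw : qf z W z = 0.
  rewrite /qf (_ : z^T *m W = (W *m z)^T); last by rewrite (trmx_mul W z) Wsym.
  rewrite Wz trmx_mul -mulmxA PTz /w trmx_mul A'sym.
  exact: (c0 z zU).
have z0 : z = 0 by apply: Wpd0.
have Pw0 : P *m w = 0 by rewrite -Wz z0 mulmx0.
have KWx : K *m (W *m x) = 0.
  by rewrite /K -!mulmxA (mulmxA Wi) WiW mul1mx xU !mulmx0.
split => //; exists rho; split.
  apply/eqP; rewrite -subr_eq0; apply/eqP; rewrite -Pw0 /P /w /A'.
  rewrite !(mulmxBl, mulmxBr, mul1mx) -scalemxAl -scalemxAr KWx scaler0 subr0 -mulmxA.
  by rewrite addrAC.
move=> mu [v vne hv].
have e : mu *: (U^T *m v) = 0.
  have := congr1 (mulmx (U^T *m Wi)) hv.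
  have -> : U^T *m Wi *m ((B - K *m B) *m v) = 0.
    by rewrite mulmxA mulmxBr (mulmxA (U^T *m Wi) K B) UWiK subrr mul0mx.
  have -> : U^T *m Wi *m (mu *: (W *m v)) = mu *: (U^T *m v).
    by rewrite -scalemxAr mulmxA -(mulmxA U^T Wi W) WiW mulmx1.
  by move=> <-.
have [->|mu0] := eqVneq mu 0.
  by rewrite /rho /rayleigh divr_ge0 // ltW.
have vU : U^T *m v = 0.
  by move: e => /eqP; rewrite scalemx_eq0 (negbTE mu0) /= => /eqP.
have vK : v^T *m K = 0.
  rewrite /K !mulmxA (_ : v^T *m U = (U^T *m v)^T); last by rewrite trmx_mul trmxK.
  by rewrite vU trmx0 !mul0mx.
have qBv : qf v B v = mu * qf v W v.
  have : qf v (B - K *m B) v = mu * qf v W v.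
    by rewrite /qf -mulmxA hv -scalemxAr [LHS]mxE mulmxA.
  by rewrite qfDA qfNA (_ : qf v (K *m B) v = 0) ?subr0 // /qf mulmxA vK !mul0mx mxE.
rewrite (_ : mu = rayleigh B W v); first exact: xmax _ vne vU.
by rewrite /rayleigh qBv mulfK // gt_eqF // Wpd.
Qed.

Definition goodm (R : realType) M (A : 'M[R]_M) : Prop :=
  A^T = A /\ forall v, 0 <= qf v A v /\ (qf v A v = 0 -> A *m v = 0).

Lemma goodm0 (R : realType) M : goodm (0 : 'M[R]_M).
Proof.
split; first by rewrite trmx0.
by move=> v; rewrite /qf !(mulmx0, mul0mx) mxE lexx.
Qed.

Lemma goodmD (R : realType) M (A B : 'M[R]_M) : goodm A -> goodm B -> goodm (A + B).
Proof.
move=> [sA hA] [sB hB]; split; first by rewrite linearD /= sA sB.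
move=> v; have [a0 a1] := hA v; have [b0 b1] := hB v.
rewrite qfDA; split; first by rewrite addr_ge0.
move=> /eqP; rewrite paddr_eq0 // => /andP [/eqP ha /eqP hb].
by rewrite mulmxDl a1 // b1 // addr0.
Qed.

Lemma goodm1 (R : realType) M (a : 'cV[R]_M) : goodm (a *m a^T).
Proof.
split; first by rewrite trmx_mul trmxK.
move=> v.
have e1 : (v^T *m a) 0 0 = (a^T *m v) 0 0.
  have -> : (v^T *m a) 0 0 = (v^T *m a)^T 0 0 by rewrite [RHS]mxE.
  by rewrite trmx_mul trmxK.
have e : qf v (a *m a^T) v = ((a^T *m v) 0 0) ^+ 2.
  by rewrite /qf mulmxA -(mulmxA _ a^T) [LHS]mxE big_ord1 e1 expr2.
rewrite e sqr_ge0; split => // /eqP; rewrite sqrf_eq0 => /eqP h0.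
rewrite -mulmxA; have -> : a^T *m v = 0 by apply/matrixP => i j; rewrite !ord1 h0 mxE.
by rewrite mulmx0.
Qed.
Lemma goodm1' (R : realType) M (a : 'cV[R]_M) : goodm (a *m a^T).
Proof. exact: goodm1. Qed.

Lemma goodW (R : realType) M N C (y : 'I_N -> 'cV[R]_M) (lab : 'I_N -> 'I_C) :
  goodm (scatter_W y lab).
Proof.
rewrite /scatter_W; apply: (big_ind (@goodm R M)) => [|A B|j _]; first exact: goodm0.
  exact: goodmD.
apply: (big_ind (@goodm R M)) => [|A B|k _]; first exact: goodm0.
  exact: goodmD.
exact: goodm1.
Qed.

Lemma goodB (R : realType) M N C (y : 'I_N -> 'cV[R]_M) (lab : 'I_N -> 'I_C) :
  goodm (scatter_B y lab).
Proof.
rewrite /scatter_B; apply: (big_ind (@goodm R M)) => [|A B|j _]; first exact: goodm0.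
  exact: goodmD.
exact: goodm1.
Qed.

Lemma rowUT (R : realType) M m (u : nat -> 'cV[R]_M) (i : 'I_m) :
  row i (Umat m u)^T = (u i)^T.
Proof. by apply/rowP => k; rewrite !mxE. Qed.

Lemma UTmulE (R : realType) M m p (u : nat -> 'cV[R]_M) (X : 'M[R]_(M, p)) i c :
  ((Umat m u)^T *m X) i c = ((u i)^T *m X) 0 c.
Proof. by rewrite -(rowUT u i) -row_mul [RHS]mxE. Qed.

Lemma UTz (R : realType) M m (u : nat -> 'cV[R]_M) (z : 'cV[R]_M) (j : 'I_m) :
  ((Umat m u)^T *m z) j 0 = dotv z (u j).
Proof.
rewrite UTmulE /dotv !mxE; apply: eq_bigr => k _; by rewrite !mxE mulrC.
Qed.

Lemma dotvC (R : realType) M (a b : 'cV[R]_M) : dotv a b = dotv b a.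
Proof. rewrite /dotv !mxE; apply: eq_bigr => k _; by rewrite !mxE mulrC. Qed.

Lemma UTU (R : realType) M m (u : nat -> 'cV[R]_M) :
  (forall i j, (i < m)%N -> (j < m)%N -> dotv (u i) (u j) = (i == j)%:R) ->
  (Umat m u)^T *m Umat m u = 1%:M.
Proof.
move=> h; apply/matrixP => i j; rewrite UTmulE.
have -> : ((u i)^T *m Umat m u) 0 j = dotv (u i) (u j).
  rewrite /dotv !mxE; apply: eq_bigr => k _; by rewrite !mxE.
by rewrite h // mxE.
Qed.

Lemma TmatE (R : realType) M m (W : 'M[R]_M) (u : nat -> 'cV[R]_M) :
  Tmat m W u = (Umat m u)^T *m invmx W *m Umat m u.
Proof.
apply/matrixP => i j; rewrite [LHS]mxE -mulmxA UTmulE mulmxA /qf.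
rewrite !mxE; apply: eq_bigr => k _; by rewrite !mxE.
Qed.

Lemma BmatE (R : realType) M m (B W : 'M[R]_M) (u : nat -> 'cV[R]_M) :
  Bmat m B W u = (Umat m u)^T *m invmx W *m B.
Proof.
by apply/matrixP => i j; rewrite [LHS]mxE -!mulmxA UTmulE.
Qed.
Unset Implicit Arguments.
Theorem theorem3 (R : realType) (M N C : nat)
  (y : 'I_N -> 'cV[R]_M) (lab : 'I_N -> 'I_C)
  (Hclass : forall j : 'I_C, (0 < class_size lab j)%N)
  (HW : scatter_W y lab \in unitmx)
  (n : nat) (Hn2 : (2 <= n)%N) (HnM : (n <= M)%N)
  (u : nat -> 'cV[R]_M) (un : 'cV[R]_M)
  (Hu : golda_directions (scatter_B y lab) (scatter_W y lab) u n.-1)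
  (Hun : constrained_maximiser (scatter_B y lab) (scatter_W y lab) u n.-1 un) :
  top_gen_eigenvector
    (scatter_B y lab
       - Umat n.-1 u *m invmx (Tmat n.-1 (scatter_W y lab) u)
           *m Bmat n.-1 (scatter_B y lab) (scatter_W y lab) u)
    (scatter_W y lab) un.
Proof.
rewrite TmatE BmatE.
have [Bsym Bg] := goodB y lab; have [Wsym Wg] := goodW y lab.
case: Hun => xne xorth xmax.
apply: core => //.
- by move=> v; exact: (Bg v).1.
- move=> v vne; have [h0 h1] := Wg v; rewrite lt_def h0 andbT; apply/negP => /eqP e.
  by move: vne; rewrite -[v](mulKmx HW) h1 // mulmx0 eqxx.
- apply: UTU => i j hi hj.
  have orth : forall a b, (a < b)%N -> (b < n.-1)%N -> dotv (u a) (u b) = 0.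
    move=> a b hab hb; rewrite dotvC.
    have [_] := Hu b hb; rewrite (negbTE (_ : b != 0%N)); last by rewrite -lt0n (leq_ltn_trans _ hab).
    by case=> _ ho _; apply: ho.
  case: (ltngtP i j) => hij.
  + by rewrite orth // (ltn_eqF hij).
  + by rewrite dotvC orth // (gtn_eqF hij).
  + by rewrite hij (Hu j hj).1.
- by apply/matrixP => j k; rewrite ord1 UTz xorth // mxE.
- move=> z zne zU; apply: xmax zne _ => j hj.
  by rewrite -(UTz u z (Ordinal hj)) zU mxE.
Qed.
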